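(* The $5 \times 5$ knight's framework in $\mathbb{R}^2$ is infinitesimally rigid.
   Context: A framework in $\mathbb{R}^d$ is a finite graph whose vertices (called joints) are distinct points of $\mathbb{R}^d$ and whose edges (called bars) are line segments between pairs of joints. An infinitesimal motion of $\mathbb{R}^d$ is a map $f:\mathbb{R}^d\to\mathbb{R}^d$ with $(f(x)-f(y))\cdot(x-y)=0$ for all $x,y\in\mathbb{R}^d$. If $F$ is a framework with joint set $X$, an infinitesimal motion of $F$ is a map $g:X\to\mathbb{R}^d$ with $(g(x)-g(y))\cdot(x-y)=0$ for every bar $xy$ of $F$. $F$ is infinitesimally rigid if every infinitesimal motion of $F$ is the restriction to $X$ of some infinitesimal motion of $\mathbb{R}^d$. The $m\times n$ knight's framework in $\mathbb{R}^2$ has a joint at every integer point $(x,y)$ with $0\le x\le m-1$, $0\le y\le n-1$, and a bar between $(x_1,y_1)$ and $(x_2,y_2)$ exactly when $|x_1-x_2|=1,|y_1-y_2|=2$ or $|x_1-x_2|=2,|y_1-y_2|=1$. *)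

(* Defs.v *)
From HB Require Import structures.
From mathcomp Require Import all_boot all_order all_algebra.
From mathcomp Require Import reals.
Set Implicit Arguments. Unset Strict Implicit. Unset Printing Implicit Defensive.
Import Order.TTheory GRing.Theory Num.Theory.
Local Open Scope ring_scope.

Definition dot (R : realType) (d : nat) (u v : 'rV[R]_d) : R :=
  \sum_(k < d) u ord0 k * v ord0 k.

Definition inf_motion_space (R : realType) (d : nat) (f : 'rV[R]_d -> 'rV[R]_d) : Prop :=
  forall x y : 'rV[R]_d, dot (f x - f y) (x - y) = 0.

Record framework (R : realType) (d : nat) := Framework {
  fw_joint : finType;
  fw_pos : fw_joint -> 'rV[R]_d;
  fw_bar : rel fw_joint;
  fw_pos_inj : injective fw_pos;
}.

Definition inf_motion (R : realType) (d : nat) (F : framework R d)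
    (g : fw_joint F -> 'rV[R]_d) : Prop :=
  forall x y : fw_joint F, @fw_bar R d F x y ->
    dot (g x - g y) (@fw_pos R d F x - @fw_pos R d F y) = 0.

Definition inf_rigid (R : realType) (d : nat) (F : framework R d) : Prop :=
  forall g : fw_joint F -> 'rV[R]_d, inf_motion g ->
    exists f : 'rV[R]_d -> 'rV[R]_d,
      inf_motion_space f /\ forall x : fw_joint F, g x = f (@fw_pos R d F x).

Definition nat_dist (a b : nat) : nat := (a - b + (b - a))%N.

Definition knight_bar (m n : nat) : rel ('I_m * 'I_n) :=
  fun u v =>
    ((nat_dist u.1 v.1 == 1%N) && (nat_dist u.2 v.2 == 2%N)) ||
    ((nat_dist u.1 v.1 == 2%N) && (nat_dist u.2 v.2 == 1%N)).

Definition knight_pos (R : realType) (m n : nat) (u : 'I_m * 'I_n) : 'rV[R]_2 :=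
  \row_(k < 2) (if k == ord0 then (u.1 : nat)%:R else (u.2 : nat)%:R).

Lemma knight_pos_inj (R : realType) (m n : nat) : injective (@knight_pos R m n).
Proof.
move=> [a b] [c e] /rowP H.
have H0 := H ord0; have H1 := H (lift ord0 ord0).
rewrite !mxE /= in H0 H1.
move/eqP: H0; rewrite eqr_nat => /eqP /val_inj ->.
move/eqP: H1; rewrite eqr_nat => /eqP /val_inj -> //.
Qed.

Definition knight_framework (R : realType) (m n : nat) : framework R 2 :=
  @Framework R 2 ('I_m * 'I_n)%type (@knight_pos R m n)
    (knight_bar (m:=m) (n:=n)) (@knight_pos_inj R m n).

(* Main.v *)
Require Import Defs.
From mathcomp Require Import all_boot all_order all_algebra.
From mathcomp Require Import reals.
From mathcomp Require Import ring lra.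
Set Implicit Arguments. Unset Strict Implicit. Unset Printing Implicit Defensive.
Import Order.TTheory GRing.Theory Num.Theory.
Local Open Scope ring_scope.

Lemma dot2 (R : realType) (a b : 'rV[R]_2) :
  dot a b = a ord0 ord0 * b ord0 ord0 + a ord0 ord_max * b ord0 ord_max.
Proof.
rewrite /dot big_ord_recr big_ord1 /=.
by have -> : widen_ord (leqnSn 1) ord0 = ord0 :> 'I_2 by apply: val_inj.
Qed.

Lemma combE (R : realType) (k x y z : R) : k != 0 -> z = 0 -> k * (x - y) = z -> x = y.
Proof. move=> k0 z0; rewrite z0 => /eqP; rewrite mulf_eq0 (negbTE k0) subr_eq0 /=; exact/eqP. Qed.
Lemma comb (R : realType) (c x y : R) : x = 0 -> y = 0 -> x + c * y = 0.
Proof. by move=> -> ->; rewrite mulr0 addr0. Qed.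
Lemma scale0 (R : realType) (c x : R) : x = 0 -> c * x = 0.
Proof. by move=> ->; rewrite mulr0. Qed.

Theorem theorem2 (R : realType) : inf_rigid (knight_framework R 5 5).
Proof.
move=> g Hg.
pose GX (a b : nat) := g (inord a, inord b) ord0 ord0.
pose GY (a b : nat) := g (inord a, inord b) ord0 ord_max.
have E : forall a b c d, knight_bar (inord a : 'I_5, inord b : 'I_5) (inord c, inord d) ->
   (a < 5)%N -> (b < 5)%N -> (c < 5)%N -> (d < 5)%N ->
   (GX a b - GX c d) * (a%:R - c%:R) + (GY a b - GY c d) * (b%:R - d%:R) = 0 :> R.
  move=> a b c d Hb Ha Hb' Hc Hd.
  have := Hg _ _ Hb; rewrite dot2 /= !mxE /= !inordK //.
have Hrot : forall x : 'I_5 * 'I_5, x = (inord x.1, inord x.2).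
  by case=> x y; rewrite /= !inord_val.
pose t := g (inord 0, inord 0).
pose w := - (GX 0 4 - GX 0 0) / 4%:R.
have Hw : 4%:R * w = - (GX 0 4 - GX 0 0) by rewrite /w mulrC divfK // pnatr_eq0.
clearbody w.
exists (fun x => t + w *: \row_(k < 2) (if k == ord0 then - x ord0 ord_max else x ord0 ord0)).
split.
  move=> x y; rewrite dot2 !mxE /=; ring.
have e0 := E 0%N 0%N 1%N 2%N ltac:(by rewrite /knight_bar /= !inordK) isT isT isT isT.
have e1 := E 0%N 0%N 2%N 1%N ltac:(by rewrite /knight_bar /= !inordK) isT isT isT isT.
have e2 := E 0%N 1%N 1%N 3%N ltac:(by rewrite /knight_bar /= !inordK) isT isT isT isT.
have e3 := E 0%N 1%N 2%N 2%N ltac:(by rewrite /knight_bar /= !inordK) isT isT isT isT.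
have e4 := E 0%N 1%N 2%N 0%N ltac:(by rewrite /knight_bar /= !inordK) isT isT isT isT.
have e5 := E 0%N 2%N 1%N 4%N ltac:(by rewrite /knight_bar /= !inordK) isT isT isT isT.
have e6 := E 0%N 2%N 2%N 3%N ltac:(by rewrite /knight_bar /= !inordK) isT isT isT isT.
have e7 := E 0%N 2%N 1%N 0%N ltac:(by rewrite /knight_bar /= !inordK) isT isT isT isT.
have e8 := E 0%N 2%N 2%N 1%N ltac:(by rewrite /knight_bar /= !inordK) isT isT isT isT.
have e9 := E 0%N 3%N 2%N 4%N ltac:(by rewrite /knight_bar /= !inordK) isT isT isT isT.
have e10 := E 0%N 3%N 1%N 1%N ltac:(by rewrite /knight_bar /= !inordK) isT isT isT isT.
have e11 := E 0%N 3%N 2%N 2%N ltac:(by rewrite /knight_bar /= !inordK) isT isT isT isT.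
have e12 := E 0%N 4%N 1%N 2%N ltac:(by rewrite /knight_bar /= !inordK) isT isT isT isT.
have e13 := E 0%N 4%N 2%N 3%N ltac:(by rewrite /knight_bar /= !inordK) isT isT isT isT.
have e14 := E 1%N 0%N 2%N 2%N ltac:(by rewrite /knight_bar /= !inordK) isT isT isT isT.
have e15 := E 1%N 0%N 3%N 1%N ltac:(by rewrite /knight_bar /= !inordK) isT isT isT isT.
have e16 := E 1%N 1%N 2%N 3%N ltac:(by rewrite /knight_bar /= !inordK) isT isT isT isT.
have e17 := E 1%N 1%N 3%N 2%N ltac:(by rewrite /knight_bar /= !inordK) isT isT isT isT.
have e18 := E 1%N 1%N 3%N 0%N ltac:(by rewrite /knight_bar /= !inordK) isT isT isT isT.
have e19 := E 1%N 2%N 2%N 4%N ltac:(by rewrite /knight_bar /= !inordK) isT isT isT isT.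
have e20 := E 1%N 2%N 3%N 3%N ltac:(by rewrite /knight_bar /= !inordK) isT isT isT isT.
have e21 := E 1%N 2%N 2%N 0%N ltac:(by rewrite /knight_bar /= !inordK) isT isT isT isT.
have e22 := E 1%N 2%N 3%N 1%N ltac:(by rewrite /knight_bar /= !inordK) isT isT isT isT.
have e23 := E 1%N 3%N 3%N 4%N ltac:(by rewrite /knight_bar /= !inordK) isT isT isT isT.
have e24 := E 1%N 3%N 2%N 1%N ltac:(by rewrite /knight_bar /= !inordK) isT isT isT isT.
have e25 := E 1%N 3%N 3%N 2%N ltac:(by rewrite /knight_bar /= !inordK) isT isT isT isT.
have e26 := E 1%N 4%N 2%N 2%N ltac:(by rewrite /knight_bar /= !inordK) isT isT isT isT.
have e27 := E 1%N 4%N 3%N 3%N ltac:(by rewrite /knight_bar /= !inordK) isT isT isT isT.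
have e28 := E 2%N 0%N 3%N 2%N ltac:(by rewrite /knight_bar /= !inordK) isT isT isT isT.
have e29 := E 2%N 0%N 4%N 1%N ltac:(by rewrite /knight_bar /= !inordK) isT isT isT isT.
have e30 := E 2%N 1%N 3%N 3%N ltac:(by rewrite /knight_bar /= !inordK) isT isT isT isT.
have e31 := E 2%N 1%N 4%N 2%N ltac:(by rewrite /knight_bar /= !inordK) isT isT isT isT.
have e32 := E 2%N 1%N 4%N 0%N ltac:(by rewrite /knight_bar /= !inordK) isT isT isT isT.
have e33 := E 2%N 2%N 3%N 4%N ltac:(by rewrite /knight_bar /= !inordK) isT isT isT isT.
have e34 := E 2%N 2%N 4%N 3%N ltac:(by rewrite /knight_bar /= !inordK) isT isT isT isT.
have e35 := E 2%N 2%N 3%N 0%N ltac:(by rewrite /knight_bar /= !inordK) isT isT isT isT.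
have e36 := E 2%N 2%N 4%N 1%N ltac:(by rewrite /knight_bar /= !inordK) isT isT isT isT.
have e37 := E 2%N 3%N 4%N 4%N ltac:(by rewrite /knight_bar /= !inordK) isT isT isT isT.
have e38 := E 2%N 3%N 3%N 1%N ltac:(by rewrite /knight_bar /= !inordK) isT isT isT isT.
have e39 := E 2%N 3%N 4%N 2%N ltac:(by rewrite /knight_bar /= !inordK) isT isT isT isT.
have e40 := E 2%N 4%N 3%N 2%N ltac:(by rewrite /knight_bar /= !inordK) isT isT isT isT.
have e41 := E 2%N 4%N 4%N 3%N ltac:(by rewrite /knight_bar /= !inordK) isT isT isT isT.
have e42 := E 3%N 0%N 4%N 2%N ltac:(by rewrite /knight_bar /= !inordK) isT isT isT isT.
have e43 := E 3%N 1%N 4%N 3%N ltac:(by rewrite /knight_bar /= !inordK) isT isT isT isT.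
have e44 := E 3%N 2%N 4%N 4%N ltac:(by rewrite /knight_bar /= !inordK) isT isT isT isT.
have e45 := E 3%N 2%N 4%N 0%N ltac:(by rewrite /knight_bar /= !inordK) isT isT isT isT.
have e46 := E 3%N 3%N 4%N 1%N ltac:(by rewrite /knight_bar /= !inordK) isT isT isT isT.
have e47 := E 3%N 4%N 4%N 2%N ltac:(by rewrite /knight_bar /= !inordK) isT isT isT isT.
unfold GX, GY in *; clear E.
have {}Hw : 4%:R * w + (g (inord 0, inord 4) ord0 ord0 - g (inord 0, inord 0) ord0 ord0) = 0.
  by rewrite Hw addNr.
have fx_0_1 : g (inord 0, inord 1) ord0 ord0 = g (inord 0, inord 0) ord0 ord0 - w * 1%:R.
  apply: (@combE _ 240%:R _ _ _ _ (comb 60%:R (comb 92%:R (comb (- 12%:R) (comb (- 120%:R) (comb (- 9%:R) (comb (- 90%:R) (comb 212%:R (comb (- 115%:R) (comb 200%:R (comb 15%:R (comb 150%:R (comb (- 132%:R) (comb 69%:R (comb (- 192%:R) (comb 16%:R (comb (- 20%:R) (comb (- 144%:R) (comb 180%:R (comb (- 256%:R) (comb 228%:R (comb 96%:R (comb 12%:R (comb (- 160%:R) (comb 240%:R (comb (- 180%:R) (comb 144%:R (comb (- 180%:R) (comb 40%:R (comb (- 20%:R) (comb 25%:R (comb (- 20%:R) (comb (- 15%:R) (comb (- 126%:R) (comb 108%:R (comb 66%:R (comb 12%:R (comb (- 141%:R) (comb 75%:R (comb (- 108%:R) (comb 120%:R (scale0 (- 60%:R) e0) e1) e2) e3) e4)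 e5) e6) e7) e8) e9) e10) e11) e12) e13) e14) e15) e16) e17) e18) e19) e20) e21) e22) e24) e25) e26) e27) e28) e29) e30) e31) e34) e35) e36) e38) e39) e41) e42) e43) e46) Hw)); first by rewrite pnatr_eq0.
  ring.
have fy_0_1 : g (inord 0, inord 1) ord0 ord_max = g (inord 0, inord 0) ord0 ord_max + w * 0%:R.
  apply: (@combE _ 1800%:R _ _ _ _ (comb 580%:R (comb (- 372%:R) (comb (- 264%:R) (comb (- 279%:R) (comb (- 198%:R) (comb (- 180%:R) (comb (- 725%:R) (comb 440%:R (comb 465%:R (comb 330%:R (comb (- 636%:R) (comb 435%:R (comb 192%:R (comb 248%:R (comb (- 310%:R) (comb 144%:R (comb (- 180%:R) (comb 504%:R (comb (- 900%:R) (comb 360%:R (comb 372%:R (comb (- 352%:R) (comb (- 240%:R) (comb 564%:R (comb (- 600%:R) (comb 750%:R (comb 775%:R (comb (- 620%:R) (comb (- 465%:R) (comb 702%:R (comb (- 450%:R) (comb (- 570%:R) (comb 186%:R (comb 981%:R (comb (- 1035%:R) (comb 108%:R (comb (- 600%:R) (scale0 1200%:R e0) e1) e2) e3) e4) e5) e6) e7) e8) e9) e10) e11) e14) e15) e16) e17) e18) e19) e20) e21) e22) e24) e25) e26) e27) e28) e29) e30) e31) e34) e35) e36) e38) e39) e41) e42) e43) e46)); first by rewrite pnatr_eq0.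
  ring.
have fx_0_2 : g (inord 0, inord 2) ord0 ord0 = g (inord 0, inord 0) ord0 ord0 - w * 2%:R.
  apply: (@combE _ 120%:R _ _ _ _ (comb 60%:R (comb 4%:R (comb (- 28%:R) (comb (- 24%:R) (comb (- 21%:R) (comb 24%:R (comb (- 18%:R) (comb 68%:R (comb (- 5%:R) (comb 40%:R (comb 35%:R (comb 30%:R (comb (- 28%:R) (comb 3%:R (comb (- 24%:R) (comb (- 16%:R) (comb 20%:R (comb (- 48%:R) (comb 60%:R (comb (- 64%:R) (comb 36%:R (comb 32%:R (comb (- 12%:R) (comb (- 32%:R) (comb 48%:R (comb (- 36%:R) (comb 16%:R (comb (- 20%:R) (comb 40%:R (comb (- 20%:R) (comb 5%:R (comb (- 4%:R) (comb (- 3%:R) (comb (- 54%:R) (comb 12%:R (comb (- 6%:R) (comb (- 12%:R) (comb (- 27%:R) (comb 45%:R (comb (- 36%:R) (comb 40%:R (scale0 (- 20%:R) e0) e1) e2) e3) e4) e5) e6) e7) e8) e9) e10) e11) e12) e13) e14) e15) e16) e17) e18) e19) e20) e21) e22) e24) e25) e26) e27) e28) e29) e30) e31) e34) e35) e36) e38) e39) e40) e41) e42) e43) e46) Hw)); first by rewrite pnatr_eq0.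
  ring.
have fy_0_2 : g (inord 0, inord 2) ord0 ord_max = g (inord 0, inord 0) ord0 ord_max + w * 0%:R.
  apply: (@combE _ 450%:R _ _ _ _ (comb (- 100%:R) (comb 24%:R (comb 48%:R (comb 18%:R (comb (- 180%:R) (comb 36%:R (comb (- 360%:R) (comb 125%:R (comb (- 80%:R) (comb (- 30%:R) (comb (- 60%:R) (comb 252%:R (comb (- 75%:R) (comb 276%:R (comb 64%:R (comb (- 80%:R) (comb 432%:R (comb (- 540%:R) (comb 432%:R (comb (- 360%:R) (comb (- 240%:R) (comb 276%:R (comb 64%:R (comb (- 480%:R) (comb 552%:R (comb (- 240%:R) (comb 300%:R (comb 350%:R (comb (- 280%:R) (comb (- 210%:R) (comb 486%:R (comb (- 180%:R) (comb (- 420%:R) (comb 48%:R (comb 243%:R (comb (- 405%:R) (comb 324%:R (comb (- 150%:R) (scale0 300%:R e0) e1) e2) e3) e4) e5) e6) e7) e8) e9) e10) e11) e14) e15) e16) e17) e18) e19) e20) e21) e22) e24) e25) e26) e27) e28) e29) e30) e31) e34) e35) e36) e38) e39) e40) e41) e42) e43) e46)); first by rewrite pnatr_eq0.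
  ring.
have fx_0_3 : g (inord 0, inord 3) ord0 ord0 = g (inord 0, inord 0) ord0 ord0 - w * 3%:R.
  apply: (@combE _ 240%:R _ _ _ _ (comb 180%:R (comb 148%:R (comb (- 68%:R) (comb (- 120%:R) (comb (- 51%:R) (comb 48%:R (comb (- 90%:R) (comb 348%:R (comb (- 185%:R) (comb 200%:R (comb 85%:R (comb 150%:R (comb (- 268%:R) (comb 111%:R (comb (- 240%:R) (comb (- 16%:R) (comb 20%:R (comb (- 240%:R) (comb 300%:R (comb (- 384%:R) (comb 252%:R (comb 224%:R (comb (- 12%:R) (comb (- 160%:R) (comb 336%:R (comb (- 300%:R) (comb 176%:R (comb (- 220%:R) (comb 120%:R (comb (- 60%:R) (comb (- 125%:R) (comb 52%:R (comb (- 21%:R) (comb (- 174%:R) (comb 132%:R (comb 114%:R (comb (- 12%:R) (comb (- 135%:R) (comb 225%:R (comb (- 180%:R) (comb 40%:R (scale0 (- 20%:R) e0) e1) e2) e3) e4) e5) e6) e7) e8) e9) e10) e11) e12) e13) e14) e15) e16) e17) e18) e19) e20) e21) e22) e24) e25) e26) e27) e28) e29) e30) e31) e34) e35) e36) e38) e39) e40) e41) e42) e43) e46) Hw)); first by rewrite pnatr_eq0.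
  ring.
have fy_0_3 : g (inord 0, inord 3) ord0 ord_max = g (inord 0, inord 0) ord0 ord_max + w * 0%:R.
  apply: (@combE _ 600%:R _ _ _ _ (comb (- 180%:R) (comb (- 92%:R) (comb 216%:R (comb (- 69%:R) (comb (- 240%:R) (comb 162%:R (comb (- 540%:R) (comb 225%:R (comb (- 360%:R) (comb 115%:R (comb (- 270%:R) (comb 524%:R (comb (- 135%:R) (comb 432%:R (comb 168%:R (comb (- 210%:R) (comb 624%:R (comb (- 780%:R) (comb 744%:R (comb (- 540%:R) (comb (- 520%:R) (comb 492%:R (comb 288%:R (comb (- 720%:R) (comb 684%:R (comb (- 520%:R) (comb 650%:R (comb 525%:R (comb (- 180%:R) (comb (- 435%:R) (comb 582%:R (comb (- 390%:R) (comb (- 450%:R) (comb 126%:R (comb 351%:R (comb (- 585%:R) (comb 468%:R (comb (- 200%:R) (scale0 400%:R e0) e1) e2) e3) e4) e5) e6) e7) e8) e9) e10) e11) e14) e15) e16) e17) e18) e19) e20) e21) e22) e24) e25) e26) e27) e28) e29) e30) e31) e34) e35) e36) e38) e39) e40) e41) e42) e43) e46)); first by rewrite pnatr_eq0.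
  ring.
have fx_0_4 : g (inord 0, inord 4) ord0 ord0 = g (inord 0, inord 0) ord0 ord0 - w * 4%:R.
  apply: (@combE _ 1%:R _ _ _ _ (scale0 1%:R Hw)); first by rewrite pnatr_eq0.
  ring.
have fy_0_4 : g (inord 0, inord 4) ord0 ord_max = g (inord 0, inord 0) ord0 ord_max + w * 0%:R.
  apply: (@combE _ 450%:R _ _ _ _ (comb (- 140%:R) (comb (- 12%:R) (comb 96%:R (comb (- 9%:R) (comb 72%:R (comb (- 300%:R) (comb 175%:R (comb (- 160%:R) (comb 15%:R (comb (- 120%:R) (comb 84%:R (comb (- 105%:R) (comb 192%:R (comb (- 112%:R) (comb 140%:R (comb 144%:R (comb (- 180%:R) (comb 384%:R (comb (- 180%:R) (comb 12%:R (comb 128%:R (comb (- 240%:R) (comb 204%:R (comb (- 240%:R) (comb 300%:R (comb (- 150%:R) (comb 300%:R (comb 25%:R (comb (- 20%:R) (comb (- 15%:R) (comb 162%:R (comb (- 180%:R) (comb (- 30%:R) (comb (- 84%:R) (comb 81%:R (comb (- 135%:R) (comb 108%:R (comb (- 150%:R) (scale0 300%:R e0) e1) e2) e3) e4) e5) e6) e7) e8) e9) e10) e11) e12) e13) e14) e15) e16) e17) e18) e19) e21) e22) e24) e25) e26) e27) e28) e29) e30) e31) e34) e35) e36) e38) e39) e41) e42) e43) e46)); first by rewrite pnatr_eq0.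
  ring.
have fx_1_0 : g (inord 1, inord 0) ord0 ord0 = g (inord 0, inord 0) ord0 ord0 - w * 0%:R.
  apply: (@combE _ 1800%:R _ _ _ _ (comb 620%:R (comb (- 372%:R) (comb (- 744%:R) (comb (- 279%:R) (comb 360%:R (comb (- 558%:R) (comb 1260%:R (comb (- 775%:R) (comb 1240%:R (comb 465%:R (comb 930%:R (comb (- 756%:R) (comb 465%:R (comb (- 1128%:R) (comb 208%:R (comb (- 260%:R) (comb (- 1296%:R) (comb 1620%:R (comb (- 1296%:R) (comb 1260%:R (comb 480%:R (comb (- 228%:R) (comb (- 992%:R) (comb 1680%:R (comb (- 1356%:R) (comb 480%:R (comb (- 1500%:R) (comb (- 25%:R) (comb 20%:R (comb 15%:R (comb (- 1458%:R) (comb 1260%:R (comb 750%:R (comb 156%:R (comb (- 729%:R) (comb 1215%:R (comb (- 972%:R) (comb 1200%:R (scale0 (- 600%:R) e0) e1) e2) e3) e4) e5) e6) e7) e8) e9) e10) e11) e14) e15) e16) e17) e18) e19) e20) e21) e22) e24) e25) e26) e27) e28) e29) e30) e31) e34) e35) e36) e38) e39) e40) e41) e42) e43) e46)); first by rewrite pnatr_eq0.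
  ring.
have fy_1_0 : g (inord 1, inord 0) ord0 ord_max = g (inord 0, inord 0) ord0 ord_max + w * 1%:R.
  apply: (@combE _ 60%:R _ _ _ _ (comb (- 15%:R) (comb (- 4%:R) (comb 4%:R (comb 3%:R (comb (- 24%:R) (comb (- 44%:R) (comb 5%:R (comb (- 5%:R) (comb 28%:R (comb (- 3%:R) (comb 24%:R (comb 16%:R (comb (- 20%:R) (comb 48%:R (comb (- 60%:R) (comb 52%:R (comb (- 36%:R) (comb (- 32%:R) (comb 36%:R (comb (- 48%:R) (comb 60%:R (comb (- 28%:R) (comb 20%:R (comb (- 10%:R) (comb 5%:R (comb 45%:R (comb (- 36%:R) (comb (- 27%:R) (comb 54%:R (comb (- 36%:R) (comb (- 42%:R) (comb 12%:R (comb 27%:R (comb (- 45%:R) (comb 36%:R (comb (- 10%:R) (scale0 35%:R e0) e1) e2) e3) e4) e5) e6) e7) e8) e9) e10) e11) e12) e13) e14) e15) e16) e17) e19) e20) e21) e22) e24) e25) e26) e27) e28) e29) e30) e34) e36) e38) e40) e41) e43) e46) Hw)); first by rewrite pnatr_eq0.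
  ring.
have fx_1_1 : g (inord 1, inord 1) ord0 ord0 = g (inord 0, inord 0) ord0 ord0 - w * 1%:R.
  apply: (@combE _ 3600%:R _ _ _ _ (comb 900%:R (comb 1420%:R (comb (- 924%:R) (comb (- 2568%:R) (comb (- 693%:R) (comb 1800%:R (comb (- 1926%:R) (comb 5700%:R (comb (- 1775%:R) (comb 4280%:R (comb 1155%:R (comb 3210%:R (comb (- 4692%:R) (comb 1065%:R (comb (- 3336%:R) (comb (- 1744%:R) (comb 2180%:R (comb (- 4752%:R) (comb 5940%:R (comb (- 6432%:R) (comb 4140%:R (comb 4800%:R (comb (- 2076%:R) (comb (- 3424%:R) (comb 5520%:R (comb (- 6132%:R) (comb 3120%:R (comb (- 3900%:R) (comb 600%:R (comb (- 300%:R) (comb (- 2075%:R) (comb 1660%:R (comb 1245%:R (comb (- 3906%:R) (comb 2340%:R (comb 3390%:R (comb (- 1308%:R) (comb (- 2673%:R) (comb 4455%:R (comb (- 3564%:R) (comb 1800%:R (scale0 (- 900%:R) e0) e1) e2) e3) e4) e5) e6) e7) e8) e9) e10) e11) e12) e13) e14) e15) e16) e17) e18) e19) e20) e21) e22) e24) e25) e26) e27) e28) e29) e30) e31) e34) e35) e36) e38) e39) e40) e41) e42) e43) e46) Hw)); first by rewrite pnatr_eq0.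
  ring.
have fy_1_1 : g (inord 1, inord 1) ord0 ord_max = g (inord 0, inord 0) ord0 ord_max + w * 1%:R.
  apply: (@combE _ 1800%:R _ _ _ _ (comb (- 450%:R) (comb (- 740%:R) (comb (- 252%:R) (comb 456%:R (comb (- 189%:R) (comb (- 450%:R) (comb 342%:R (comb (- 1500%:R) (comb 925%:R (comb (- 760%:R) (comb 315%:R (comb (- 570%:R) (comb 1404%:R (comb (- 555%:R) (comb 1362%:R (comb 128%:R (comb (- 160%:R) (comb 1584%:R (comb (- 1980%:R) (comb 2064%:R (comb (- 1530%:R) (comb (- 1200%:R) (comb 1002%:R (comb 608%:R (comb (- 2040%:R) (comb 1644%:R (comb (- 1440%:R) (comb 1800%:R (comb (- 300%:R) (comb 150%:R (comb 1525%:R (comb (- 1220%:R) (comb (- 915%:R) (comb 1422%:R (comb (- 1080%:R) (comb (- 930%:R) (comb 96%:R (comb 891%:R (comb (- 1485%:R) (comb 1188%:R (comb (- 300%:R) (scale0 1050%:R e0) e1) e2) e3) e4) e5) e6) e7) e8) e9) e10) e11) e12) e13) e14) e15) e16) e17) e18) e19) e20) e21) e22) e24) e25) e26) e27) e28) e29) e30) e31) e34) e35) e36) e38) e39) e40) e41) e42) e43) e46) Hw)); first by rewrite pnatr_eq0.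
  ring.
have fx_1_2 : g (inord 1, inord 2) ord0 ord0 = g (inord 0, inord 0) ord0 ord0 - w * 2%:R.
  apply: (@combE _ 450%:R _ _ _ _ (comb 225%:R (comb 140%:R (comb 12%:R (comb (- 96%:R) (comb 9%:R (comb (- 72%:R) (comb 300%:R (comb (- 175%:R) (comb 160%:R (comb (- 15%:R) (comb 120%:R (comb (- 84%:R) (comb 105%:R (comb (- 192%:R) (comb 112%:R (comb (- 140%:R) (comb (- 144%:R) (comb 180%:R (comb (- 384%:R) (comb 180%:R (comb (- 12%:R) (comb (- 128%:R) (comb 240%:R (comb (- 204%:R) (comb 240%:R (comb (- 300%:R) (comb 150%:R (comb (- 75%:R) (comb (- 25%:R) (comb 20%:R (comb 15%:R (comb (- 162%:R) (comb 180%:R (comb 30%:R (comb 84%:R (comb (- 81%:R) (comb 135%:R (comb (- 108%:R) (comb 150%:R (scale0 (- 75%:R) e0) e1) e2) e3) e4) e5) e6) e7) e8) e9) e10) e11) e12) e13) e14) e15) e16) e17) e18) e19) e21) e22) e24) e25) e26) e27) e28) e29) e30) e31) e34) e35) e36) e38) e39) e41) e42) e43) e46) Hw)); first by rewrite pnatr_eq0.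
  ring.
have fy_1_2 : g (inord 1, inord 2) ord0 ord_max = g (inord 0, inord 0) ord0 ord_max + w * 1%:R.
  apply: (@combE _ 900%:R _ _ _ _ (comb (- 225%:R) (comb (- 140%:R) (comb (- 12%:R) (comb 96%:R (comb (- 9%:R) (comb 72%:R (comb (- 300%:R) (comb 175%:R (comb (- 160%:R) (comb 15%:R (comb (- 120%:R) (comb 84%:R (comb (- 105%:R) (comb 192%:R (comb (- 112%:R) (comb 140%:R (comb 144%:R (comb (- 180%:R) (comb 384%:R (comb (- 180%:R) (comb 12%:R (comb 128%:R (comb (- 240%:R) (comb 204%:R (comb (- 240%:R) (comb 300%:R (comb (- 150%:R) (comb 75%:R (comb 25%:R (comb (- 20%:R) (comb (- 15%:R) (comb 162%:R (comb (- 180%:R) (comb (- 30%:R) (comb (- 84%:R) (comb 81%:R (comb (- 135%:R) (comb 108%:R (comb (- 150%:R) (scale0 525%:R e0) e1) e2) e3) e4) e5) e6) e7) e8) e9) e10) e11) e12) e13) e14) e15) e16) e17) e18) e19) e21) e22) e24) e25) e26) e27) e28) e29) e30) e31) e34) e35) e36) e38) e39) e41) e42) e43) e46) Hw)); first by rewrite pnatr_eq0.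
  ring.
have fx_1_3 : g (inord 1, inord 3) ord0 ord0 = g (inord 0, inord 0) ord0 ord0 - w * 3%:R.
  apply: (@combE _ 3600%:R _ _ _ _ (comb 2700%:R (comb 2500%:R (comb (- 2004%:R) (comb (- 2568%:R) (comb (- 1503%:R) (comb 1800%:R (comb (- 1926%:R) (comb 5580%:R (comb (- 3125%:R) (comb 4280%:R (comb 2505%:R (comb 3210%:R (comb (- 4572%:R) (comb 1875%:R (comb (- 3336%:R) (comb (- 304%:R) (comb 380%:R (comb (- 4752%:R) (comb 4140%:R (comb (- 5472%:R) (comb 3060%:R (comb 3840%:R (comb (- 996%:R) (comb (- 3424%:R) (comb 5520%:R (comb (- 4332%:R) (comb 1680%:R (comb (- 2100%:R) (comb 1800%:R (comb (- 900%:R) (comb 175%:R (comb (- 140%:R) (comb (- 105%:R) (comb (- 1746%:R) (comb 1260%:R (comb 1230%:R (comb (- 228%:R) (comb (- 1323%:R) (comb 2205%:R (comb (- 1764%:R) (comb 600%:R (scale0 (- 300%:R) e0) e1) e2) e3) e4) e5) e6) e7) e8) e9) e10) e11) e12) e13) e14) e15) e16) e17) e18) e19) e20) e21) e22) e24) e25) e26) e27) e28) e29) e30) e31) e34) e35) e36) e38) e39) e40) e41) e42) e43) e46) Hw)); first by rewrite pnatr_eq0.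
  ring.
have fy_1_3 : g (inord 1, inord 3) ord0 ord_max = g (inord 0, inord 0) ord0 ord_max + w * 1%:R.
  apply: (@combE _ 600%:R _ _ _ _ (comb (- 150%:R) (comb 100%:R (comb 28%:R (comb (- 24%:R) (comb 21%:R (comb (- 150%:R) (comb (- 18%:R) (comb (- 260%:R) (comb (- 125%:R) (comb 40%:R (comb (- 35%:R) (comb 30%:R (comb 4%:R (comb 75%:R (comb 102%:R (comb 128%:R (comb (- 160%:R) (comb 264%:R (comb (- 180%:R) (comb 304%:R (comb (- 270%:R) (comb (- 80%:R) (comb 222%:R (comb (- 32%:R) (comb (- 240%:R) (comb 324%:R (comb (- 160%:R) (comb 200%:R (comb (- 100%:R) (comb 50%:R (comb 275%:R (comb (- 220%:R) (comb (- 165%:R) (comb 222%:R (comb (- 120%:R) (comb (- 210%:R) (comb 96%:R (comb 261%:R (comb (- 435%:R) (comb 348%:R (comb (- 100%:R) (scale0 350%:R e0) e1) e2) e3) e4) e5) e6) e7) e8) e9) e10) e11) e12) e13) e14) e15) e16) e17) e18) e19) e20) e21) e22) e24) e25) e26) e27) e28) e29) e30) e31) e34) e35) e36) e38) e39) e40) e41) e42) e43) e46) Hw)); first by rewrite pnatr_eq0.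
  ring.
have fx_1_4 : g (inord 1, inord 4) ord0 ord0 = g (inord 0, inord 0) ord0 ord0 - w * 4%:R.
  apply: (@combE _ 1800%:R _ _ _ _ (comb 1800%:R (comb 620%:R (comb (- 372%:R) (comb (- 744%:R) (comb (- 279%:R) (comb 360%:R (comb (- 558%:R) (comb 2220%:R (comb (- 775%:R) (comb 1240%:R (comb 465%:R (comb 930%:R (comb (- 1716%:R) (comb 465%:R (comb (- 1128%:R) (comb (- 512%:R) (comb (- 260%:R) (comb (- 1296%:R) (comb 1620%:R (comb (- 2496%:R) (comb 1260%:R (comb 1680%:R (comb (- 228%:R) (comb (- 992%:R) (comb 1680%:R (comb (- 1356%:R) (comb 1200%:R (comb (- 1500%:R) (comb 1200%:R (comb (- 600%:R) (comb (- 25%:R) (comb 20%:R (comb 15%:R (comb (- 738%:R) (comb 900%:R (comb 30%:R (comb 516%:R (comb (- 729%:R) (comb 1215%:R (scale0 (- 972%:R) e2) e3) e4) e5) e6) e7) e8) e9) e10) e11) e12) e13) e14) e15) e16) e17) e18) e19) e20) e21) e22) e24) e25) e26) e27) e28) e29) e30) e31) e34) e35) e36) e38) e39) e40) e41) e42) e43) e46) Hw)); first by rewrite pnatr_eq0.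
  ring.
have fy_1_4 : g (inord 1, inord 4) ord0 ord_max = g (inord 0, inord 0) ord0 ord_max + w * 1%:R.
  apply: (@combE _ 900%:R _ _ _ _ (comb (- 225%:R) (comb (- 340%:R) (comb 36%:R (comb 192%:R (comb 27%:R (comb (- 360%:R) (comb 144%:R (comb (- 1020%:R) (comb 425%:R (comb (- 320%:R) (comb (- 45%:R) (comb (- 240%:R) (comb 828%:R (comb (- 255%:R) (comb 744%:R (comb 196%:R (comb (- 20%:R) (comb 1008%:R (comb (- 1260%:R) (comb 1248%:R (comb (- 900%:R) (comb (- 780%:R) (comb 564%:R (comb 256%:R (comb (- 1200%:R) (comb 1308%:R (comb (- 720%:R) (comb 900%:R (comb (- 150%:R) (comb 75%:R (comb 725%:R (comb (- 580%:R) (comb (- 435%:R) (comb 954%:R (comb (- 540%:R) (comb (- 870%:R) (comb 372%:R (comb 567%:R (comb (- 945%:R) (comb 756%:R (comb (- 150%:R) (scale0 525%:R e0) e1) e2) e3) e4) e5) e6) e7) e8) e9) e10) e11) e12) e13) e14) e15) e16) e17) e18) e19) e20) e21) e22) e24) e25) e26) e27) e28) e29) e30) e31) e34) e35) e36) e38) e39) e40) e41) e42) e43) e46) Hw)); first by rewrite pnatr_eq0.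
  ring.
have fx_2_0 : g (inord 2, inord 0) ord0 ord0 = g (inord 0, inord 0) ord0 ord0 - w * 0%:R.
  apply: (@combE _ 450%:R _ _ _ _ (comb 40%:R (comb 24%:R (comb (- 192%:R) (comb 18%:R (comb (- 144%:R) (comb 360%:R (comb (- 50%:R) (comb 320%:R (comb (- 30%:R) (comb 240%:R (comb (- 168%:R) (comb 30%:R (comb (- 384%:R) (comb (- 76%:R) (comb 95%:R (comb (- 288%:R) (comb 360%:R (comb (- 468%:R) (comb 450%:R (comb 180%:R (comb (- 24%:R) (comb (- 256%:R) (comb 480%:R (comb (- 408%:R) (comb 300%:R (comb (- 375%:R) (comb (- 50%:R) (comb 40%:R (comb 30%:R (comb (- 324%:R) (comb 225%:R (comb 240%:R (comb (- 57%:R) (comb (- 162%:R) (comb 270%:R (comb (- 216%:R) (comb 300%:R (scale0 (- 150%:R) e0) e1) e2) e3) e4) e5) e6) e7) e8) e9) e10) e11) e14) e15) e16) e17) e18) e19) e20) e21) e22) e24) e25) e26) e27) e28) e29) e30) e31) e34) e35) e36) e38) e39) e41) e42) e43) e46)); first by rewrite pnatr_eq0.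
  ring.
have fy_2_0 : g (inord 2, inord 0) ord0 ord_max = g (inord 0, inord 0) ord0 ord_max + w * 2%:R.
  apply: (@combE _ 60%:R _ _ _ _ (comb (- 30%:R) (comb (- 16%:R) (comb (- 16%:R) (comb 20%:R (comb (- 12%:R) (comb (- 20%:R) (comb 25%:R (comb 20%:R (comb (- 24%:R) (comb 12%:R (comb (- 12%:R) (comb 15%:R (comb (- 20%:R) (comb 10%:R (comb (- 9%:R) (comb 12%:R (comb (- 15%:R) (scale0 30%:R e0) e5) e6) e7) e12) e13) e14) e15) e20) e21) e22) e26) e27) e29) e36) e38) e46) Hw)); first by rewrite pnatr_eq0.
  ring.
have fx_2_1 : g (inord 2, inord 1) ord0 ord0 = g (inord 0, inord 0) ord0 ord0 - w * 1%:R.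
  apply: (@combE _ 3600%:R _ _ _ _ (comb 900%:R (comb 260%:R (comb (- 468%:R) (comb (- 456%:R) (comb (- 351%:R) (comb 720%:R (comb (- 342%:R) (comb 1740%:R (comb (- 325%:R) (comb 760%:R (comb 585%:R (comb 570%:R (comb (- 924%:R) (comb 195%:R (comb (- 912%:R) (comb (- 368%:R) (comb 460%:R (comb (- 1584%:R) (comb 1980%:R (comb (- 1824%:R) (comb 1260%:R (comb 960%:R (comb (- 732%:R) (comb (- 608%:R) (comb 1680%:R (comb (- 1644%:R) (comb 720%:R (comb (- 900%:R) (comb 600%:R (comb (- 300%:R) (comb (- 625%:R) (comb 500%:R (comb 375%:R (comb (- 882%:R) (comb 540%:R (comb 750%:R (comb (- 276%:R) (comb (- 891%:R) (comb 1485%:R (comb (- 1188%:R) (comb 1800%:R (scale0 (- 900%:R) e0) e1) e2) e3) e4) e5) e6) e7) e8) e9) e10) e11) e12) e13) e14) e15) e16) e17) e18) e19) e20) e21) e22) e24) e25) e26) e27) e28) e29) e30) e31) e34) e35) e36) e38) e39) e40) e41) e42) e43) e46) Hw)); first by rewrite pnatr_eq0.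
  ring.
have fy_2_1 : g (inord 2, inord 1) ord0 ord_max = g (inord 0, inord 0) ord0 ord_max + w * 2%:R.
  apply: (@combE _ 1800%:R _ _ _ _ (comb (- 900%:R) (comb (- 260%:R) (comb 468%:R (comb 456%:R (comb 351%:R (comb (- 720%:R) (comb 342%:R (comb (- 1740%:R) (comb 325%:R (comb (- 760%:R) (comb (- 585%:R) (comb (- 570%:R) (comb 924%:R (comb (- 195%:R) (comb 912%:R (comb 368%:R (comb (- 460%:R) (comb 1584%:R (comb (- 1980%:R) (comb 1824%:R (comb (- 1260%:R) (comb (- 960%:R) (comb 732%:R (comb 608%:R (comb (- 1680%:R) (comb 1644%:R (comb (- 720%:R) (comb 900%:R (comb (- 600%:R) (comb 300%:R (comb 625%:R (comb (- 500%:R) (comb (- 375%:R) (comb 882%:R (comb (- 540%:R) (comb (- 750%:R) (comb 276%:R (comb 891%:R (comb (- 1485%:R) (comb 1188%:R (scale0 900%:R e0) e2) e3) e4) e5) e6) e7) e8) e9) e10) e11) e12) e13) e14) e15) e16) e17) e18) e19) e20) e21) e22) e24) e25) e26) e27) e28) e29) e30) e31) e34) e35) e36) e38) e39) e40) e41) e42) e43) e46) Hw)); first by rewrite pnatr_eq0.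
  ring.
have fx_2_2 : g (inord 2, inord 2) ord0 ord0 = g (inord 0, inord 0) ord0 ord0 - w * 2%:R.
  apply: (@combE _ 1800%:R _ _ _ _ (comb 900%:R (comb 1180%:R (comb (- 324%:R) (comb (- 1128%:R) (comb (- 243%:R) (comb 360%:R (comb (- 846%:R) (comb 2460%:R (comb (- 1475%:R) (comb 1880%:R (comb 405%:R (comb 1410%:R (comb (- 2052%:R) (comb 885%:R (comb (- 1896%:R) (comb (- 64%:R) (comb 80%:R (comb (- 1872%:R) (comb 2340%:R (comb (- 2832%:R) (comb 1980%:R (comb 1680%:R (comb (- 276%:R) (comb (- 1504%:R) (comb 2640%:R (comb (- 2172%:R) (comb 1440%:R (comb (- 1800%:R) (comb 600%:R (comb (- 300%:R) (comb (- 125%:R) (comb 100%:R (comb 75%:R (comb (- 1386%:R) (comb 1080%:R (comb 870%:R (comb (- 48%:R) (comb (- 1053%:R) (comb 1755%:R (comb (- 1404%:R) (comb 600%:R (scale0 (- 300%:R) e0) e1) e2) e3) e4) e5) e6) e7) e8) e9) e10) e11) e12) e13) e14) e15) e16) e17) e18) e19) e20) e21) e22) e24) e25) e26) e27) e28) e29) e30) e31) e34) e35) e36) e38) e39) e40) e41) e42) e43) e46) Hw)); first by rewrite pnatr_eq0.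
  ring.
have fy_2_2 : g (inord 2, inord 2) ord0 ord_max = g (inord 0, inord 0) ord0 ord_max + w * 2%:R.
  apply: (@combE _ 900%:R _ _ _ _ (comb (- 450%:R) (comb (- 200%:R) (comb 48%:R (comb 96%:R (comb 36%:R (comb (- 360%:R) (comb 72%:R (comb (- 960%:R) (comb 250%:R (comb (- 160%:R) (comb (- 60%:R) (comb (- 120%:R) (comb 744%:R (comb (- 150%:R) (comb 552%:R (comb 308%:R (comb (- 385%:R) (comb 864%:R (comb (- 1080%:R) (comb 1164%:R (comb (- 720%:R) (comb (- 780%:R) (comb 552%:R (comb 128%:R (comb (- 960%:R) (comb 1104%:R (comb (- 660%:R) (comb 825%:R (comb (- 300%:R) (comb 150%:R (comb 700%:R (comb (- 560%:R) (comb (- 420%:R) (comb 792%:R (comb (- 495%:R) (comb (- 660%:R) (comb 231%:R (comb 486%:R (comb (- 810%:R) (comb 648%:R (scale0 450%:R e0) e2) e3) e4) e5) e6) e7) e8) e9) e10) e11) e12) e13) e14) e15) e16) e17) e18) e19) e20) e21) e22) e24) e25) e26) e27) e28) e29) e30) e31) e34) e35) e36) e38) e39) e40) e41) e42) e43) e46) Hw)); first by rewrite pnatr_eq0.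
  ring.
have fx_2_3 : g (inord 2, inord 3) ord0 ord0 = g (inord 0, inord 0) ord0 ord0 - w * 3%:R.
  apply: (@combE _ 3600%:R _ _ _ _ (comb 2700%:R (comb 140%:R (comb (- 348%:R) (comb (- 456%:R) (comb (- 261%:R) (comb (- 342%:R) (comb 900%:R (comb (- 175%:R) (comb 760%:R (comb 435%:R (comb 570%:R (comb (- 84%:R) (comb 105%:R (comb (- 192%:R) (comb 112%:R (comb (- 140%:R) (comb (- 144%:R) (comb 180%:R (comb (- 864%:R) (comb 180%:R (comb 348%:R (comb (- 608%:R) (comb 240%:R (comb 156%:R (comb 240%:R (comb (- 300%:R) (comb 1800%:R (comb (- 900%:R) (comb 725%:R (comb (- 580%:R) (comb (- 435%:R) (comb (- 162%:R) (comb 180%:R (comb 30%:R (comb 84%:R (comb (- 81%:R) (comb 135%:R (comb (- 108%:R) (comb 600%:R (scale0 (- 300%:R) e0) e1) e2) e3) e4) e5) e6) e7) e8) e9) e10) e11) e12) e13) e14) e15) e16) e17) e18) e19) e21) e22) e24) e25) e26) e27) e28) e29) e30) e31) e34) e35) e36) e38) e39) e41) e42) e43) e46) Hw)); first by rewrite pnatr_eq0.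
  ring.
have fy_2_3 : g (inord 2, inord 3) ord0 ord_max = g (inord 0, inord 0) ord0 ord_max + w * 2%:R.
  apply: (@combE _ 600%:R _ _ _ _ (comb (- 300%:R) (comb (- 140%:R) (comb (- 132%:R) (comb (- 24%:R) (comb (- 99%:R) (comb (- 18%:R) (comb (- 100%:R) (comb 175%:R (comb 40%:R (comb 165%:R (comb 30%:R (comb 84%:R (comb (- 105%:R) (comb 192%:R (comb (- 112%:R) (comb 140%:R (comb 144%:R (comb (- 180%:R) (comb 224%:R (comb (- 180%:R) (comb 132%:R (comb (- 32%:R) (comb (- 240%:R) (comb 324%:R (comb (- 240%:R) (comb 300%:R (comb (- 200%:R) (comb 100%:R (comb 275%:R (comb (- 220%:R) (comb (- 165%:R) (comb 162%:R (comb (- 180%:R) (comb (- 30%:R) (comb (- 84%:R) (comb 81%:R (comb (- 135%:R) (comb 108%:R (scale0 300%:R e0) e2) e3) e4) e5) e6) e7) e8) e9) e10) e11) e12) e13) e14) e15) e16) e17) e18) e19) e21) e22) e24) e25) e26) e27) e28) e29) e30) e31) e34) e35) e36) e38) e39) e41) e42) e43) e46) Hw)); first by rewrite pnatr_eq0.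
  ring.
have fx_2_4 : g (inord 2, inord 4) ord0 ord0 = g (inord 0, inord 0) ord0 ord0 - w * 4%:R.
  apply: (@combE _ 450%:R _ _ _ _ (comb 450%:R (comb 280%:R (comb (- 216%:R) (comb (- 192%:R) (comb (- 162%:R) (comb (- 144%:R) (comb 600%:R (comb (- 350%:R) (comb 320%:R (comb 270%:R (comb 240%:R (comb (- 408%:R) (comb 210%:R (comb (- 384%:R) (comb 44%:R (comb (- 55%:R) (comb (- 288%:R) (comb 360%:R (comb (- 588%:R) (comb 360%:R (comb 300%:R (comb 66%:R (comb (- 256%:R) (comb 480%:R (comb (- 408%:R) (comb 180%:R (comb (- 225%:R) (comb 300%:R (comb (- 150%:R) (comb (- 50%:R) (comb 40%:R (comb 30%:R (comb (- 144%:R) (comb 135%:R (comb 60%:R (comb 33%:R (comb (- 162%:R) (comb 270%:R (scale0 (- 216%:R) e2) e3) e4) e5) e6) e7) e8) e9) e10) e11) e12) e13) e14) e15) e16) e17) e18) e19) e20) e21) e22) e24) e25) e26) e27) e28) e29) e30) e31) e34) e35) e36) e38) e39) e41) e42) e43) e46) Hw)); first by rewrite pnatr_eq0.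
  ring.
have fy_2_4 : g (inord 2, inord 4) ord0 ord_max = g (inord 0, inord 0) ord0 ord_max + w * 2%:R.
  apply: (@combE _ 900%:R _ _ _ _ (comb (- 450%:R) (comb (- 280%:R) (comb 216%:R (comb 192%:R (comb 162%:R (comb 144%:R (comb (- 600%:R) (comb 350%:R (comb (- 320%:R) (comb (- 270%:R) (comb (- 240%:R) (comb 408%:R (comb (- 210%:R) (comb 384%:R (comb (- 44%:R) (comb 55%:R (comb 288%:R (comb (- 360%:R) (comb 588%:R (comb (- 360%:R) (comb (- 300%:R) (comb 384%:R (comb 256%:R (comb (- 480%:R) (comb 408%:R (comb (- 180%:R) (comb 225%:R (comb (- 300%:R) (comb 150%:R (comb 50%:R (comb (- 40%:R) (comb (- 30%:R) (comb 144%:R (comb (- 135%:R) (comb (- 60%:R) (comb (- 33%:R) (comb 162%:R (comb (- 270%:R) (comb 216%:R (scale0 450%:R e0) e2) e3) e4) e5) e6) e7) e8) e9) e10) e11) e12) e13) e14) e15) e16) e17) e18) e19) e20) e21) e22) e24) e25) e26) e27) e28) e29) e30) e31) e34) e35) e36) e38) e39) e41) e42) e43) e46) Hw)); first by rewrite pnatr_eq0.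
  ring.
have fx_3_0 : g (inord 3, inord 0) ord0 ord0 = g (inord 0, inord 0) ord0 ord0 - w * 0%:R.
  apply: (@combE _ 600%:R _ _ _ _ (comb 260%:R (comb (- 92%:R) (comb (- 504%:R) (comb (- 69%:R) (comb 300%:R (comb (- 378%:R) (comb 900%:R (comb (- 325%:R) (comb 640%:R (comb 115%:R (comb 630%:R (comb (- 796%:R) (comb 195%:R (comb (- 588%:R) (comb (- 272%:R) (comb 340%:R (comb (- 816%:R) (comb 1020%:R (comb (- 1056%:R) (comb 720%:R (comb 800%:R (comb (- 408%:R) (comb (- 272%:R) (comb 960%:R (comb (- 996%:R) (comb 560%:R (comb (- 700%:R) (comb (- 475%:R) (comb 380%:R (comb 285%:R (comb (- 678%:R) (comb 420%:R (comb 570%:R (comb (- 204%:R) (comb (- 459%:R) (comb 765%:R (comb (- 612%:R) (comb 400%:R (scale0 (- 200%:R) e0) e1) e2) e3) e4) e5) e6) e7) e8) e9) e10) e11) e14) e15) e16) e17) e18) e19) e20) e21) e22) e24) e25) e26) e27) e28) e29) e30) e31) e34) e35) e36) e38) e39) e40) e41) e42) e43) e46)); first by rewrite pnatr_eq0.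
  ring.
have fy_3_0 : g (inord 3, inord 0) ord0 ord_max = g (inord 0, inord 0) ord0 ord_max + w * 3%:R.
  apply: (@combE _ 60%:R _ _ _ _ (comb (- 45%:R) (comb (- 20%:R) (comb 4%:R (comb 3%:R (comb (- 15%:R) (comb (- 60%:R) (comb 25%:R (comb (- 40%:R) (comb (- 5%:R) (comb 44%:R (comb (- 15%:R) (comb 39%:R (comb 8%:R (comb (- 10%:R) (comb 48%:R (comb (- 60%:R) (comb 72%:R (comb (- 45%:R) (comb (- 40%:R) (comb 21%:R (comb 20%:R (comb (- 60%:R) (comb 60%:R (comb (- 40%:R) (comb 50%:R (comb (- 30%:R) (comb 15%:R (comb 25%:R (comb (- 20%:R) (comb (- 15%:R) (comb 42%:R (comb (- 30%:R) (comb (- 30%:R) (comb 6%:R (comb 27%:R (comb (- 45%:R) (comb 36%:R (comb 10%:R (scale0 25%:R e0) e1) e2) e3) e4) e5) e6) e7) e8) e9) e10) e11) e12) e13) e14) e15) e16) e17) e18) e19) e20) e21) e22) e24) e25) e26) e27) e28) e29) e30) e34) e35) e36) e38) e40) e41) e43) e46) Hw)); first by rewrite pnatr_eq0.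
  ring.
have fx_3_1 : g (inord 3, inord 1) ord0 ord0 = g (inord 0, inord 0) ord0 ord0 - w * 1%:R.
  apply: (@combE _ 1200%:R _ _ _ _ (comb 300%:R (comb 420%:R (comb (- 84%:R) (comb (- 408%:R) (comb (- 63%:R) (comb (- 306%:R) (comb 700%:R (comb (- 525%:R) (comb 680%:R (comb 105%:R (comb 510%:R (comb (- 252%:R) (comb 315%:R (comb (- 576%:R) (comb 336%:R (comb (- 420%:R) (comb (- 432%:R) (comb 540%:R (comb (- 512%:R) (comb 540%:R (comb 84%:R (comb (- 544%:R) (comb 720%:R (comb (- 492%:R) (comb 720%:R (comb (- 900%:R) (comb 200%:R (comb (- 100%:R) (comb 175%:R (comb (- 140%:R) (comb (- 105%:R) (comb (- 486%:R) (comb 540%:R (comb 90%:R (comb 252%:R (comb (- 243%:R) (comb 405%:R (comb (- 324%:R) (comb 600%:R (scale0 (- 300%:R) e0) e1) e2) e3) e4) e5) e6) e7) e8) e9) e10) e11) e12) e13) e14) e15) e16) e17) e18) e19) e21) e22) e24) e25) e26) e27) e28) e29) e30) e31) e34) e35) e36) e38) e39) e41) e42) e43) e46) Hw)); first by rewrite pnatr_eq0.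
  ring.
have fy_3_1 : g (inord 3, inord 1) ord0 ord_max = g (inord 0, inord 0) ord0 ord_max + w * 3%:R.
  apply: (@combE _ 1800%:R _ _ _ _ (comb (- 1350%:R) (comb (- 140%:R) (comb (- 372%:R) (comb (- 264%:R) (comb (- 279%:R) (comb (- 198%:R) (comb (- 900%:R) (comb 175%:R (comb 440%:R (comb 465%:R (comb 330%:R (comb 84%:R (comb (- 105%:R) (comb 192%:R (comb (- 112%:R) (comb 140%:R (comb 144%:R (comb (- 180%:R) (comb 504%:R (comb (- 180%:R) (comb 372%:R (comb (- 352%:R) (comb (- 240%:R) (comb 564%:R (comb (- 240%:R) (comb 300%:R (comb (- 900%:R) (comb 450%:R (comb 775%:R (comb (- 620%:R) (comb (- 465%:R) (comb 162%:R (comb (- 180%:R) (comb (- 30%:R) (comb (- 84%:R) (comb 81%:R (comb (- 135%:R) (comb 108%:R (comb 300%:R (scale0 750%:R e0) e1) e2) e3) e4) e5) e6) e7) e8) e9) e10) e11) e12) e13) e14) e15) e16) e17) e18) e19) e21) e22) e24) e25) e26) e27) e28) e29) e30) e31) e34) e35) e36) e38) e39) e41) e42) e43) e46) Hw)); first by rewrite pnatr_eq0.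
  ring.
have fx_3_2 : g (inord 3, inord 2) ord0 ord0 = g (inord 0, inord 0) ord0 ord0 - w * 2%:R.
  apply: (@combE _ 150%:R _ _ _ _ (comb 75%:R (comb 60%:R (comb (- 68%:R) (comb (- 96%:R) (comb (- 51%:R) (comb 75%:R (comb (- 72%:R) (comb 220%:R (comb (- 75%:R) (comb 160%:R (comb 85%:R (comb 120%:R (comb (- 164%:R) (comb 45%:R (comb (- 117%:R) (comb (- 48%:R) (comb 60%:R (comb (- 144%:R) (comb 180%:R (comb (- 224%:R) (comb 135%:R (comb 160%:R (comb (- 57%:R) (comb (- 128%:R) (comb 240%:R (comb (- 204%:R) (comb 80%:R (comb (- 100%:R) (comb 50%:R (comb (- 25%:R) (comb (- 25%:R) (comb 20%:R (comb 15%:R (comb (- 102%:R) (comb 60%:R (comb 90%:R (comb (- 36%:R) (comb (- 81%:R) (comb 135%:R (comb (- 108%:R) (comb 50%:R (scale0 (- 25%:R) e0) e1) e2) e3) e4) e5) e6) e7) e8) e9) e10) e11) e12) e13) e14) e15) e16) e17) e18) e19) e20) e21) e22) e24) e25) e26) e27) e28) e29) e30) e31) e34) e35) e36) e38) e39) e40) e41) e42) e43) e46) Hw)); first by rewrite pnatr_eq0.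
  ring.
have fy_3_2 : g (inord 3, inord 2) ord0 ord_max = g (inord 0, inord 0) ord0 ord_max + w * 3%:R.
  apply: (@combE _ 900%:R _ _ _ _ (comb (- 675%:R) (comb (- 380%:R) (comb 228%:R (comb 96%:R (comb 171%:R (comb (- 225%:R) (comb 72%:R (comb (- 540%:R) (comb 475%:R (comb (- 160%:R) (comb (- 285%:R) (comb (- 120%:R) (comb 324%:R (comb (- 285%:R) (comb 417%:R (comb (- 232%:R) (comb 290%:R (comb 144%:R (comb (- 180%:R) (comb 504%:R (comb (- 315%:R) (comb (- 120%:R) (comb 147%:R (comb 128%:R (comb (- 240%:R) (comb 204%:R (comb (- 120%:R) (comb 150%:R (comb (- 450%:R) (comb 225%:R (comb 25%:R (comb (- 20%:R) (comb (- 15%:R) (comb (- 18%:R) (comb (- 90%:R) (comb 150%:R (comb (- 174%:R) (comb 81%:R (comb (- 135%:R) (comb 108%:R (comb 150%:R (scale0 375%:R e0) e1) e2) e3) e4) e5) e6) e7) e8) e9) e10) e11) e12) e13) e14) e15) e16) e17) e18) e19) e20) e21) e22) e24) e25) e26) e27) e28) e29) e30) e31) e34) e35) e36) e38) e39) e40) e41) e42) e43) e46) Hw)); first by rewrite pnatr_eq0.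
  ring.
have fx_3_3 : g (inord 3, inord 3) ord0 ord0 = g (inord 0, inord 0) ord0 ord0 - w * 3%:R.
  apply: (@combE _ 1200%:R _ _ _ _ (comb 900%:R (comb 460%:R (comb (- 124%:R) (comb (- 408%:R) (comb (- 93%:R) (comb 240%:R (comb (- 306%:R) (comb 1380%:R (comb (- 575%:R) (comb 680%:R (comb 155%:R (comb 510%:R (comb (- 932%:R) (comb 345%:R (comb (- 816%:R) (comb 176%:R (comb (- 220%:R) (comb (- 912%:R) (comb 1140%:R (comb (- 1632%:R) (comb 900%:R (comb 1120%:R (comb (- 276%:R) (comb (- 544%:R) (comb 1200%:R (comb (- 1092%:R) (comb 880%:R (comb (- 1100%:R) (comb 600%:R (comb (- 300%:R) (comb (- 275%:R) (comb 220%:R (comb 165%:R (comb (- 726%:R) (comb 660%:R (comb 330%:R (comb 132%:R (comb (- 513%:R) (comb 855%:R (comb (- 684%:R) (comb 200%:R (scale0 (- 100%:R) e0) e1) e2) e3) e4) e5) e6) e7) e8) e9) e10) e11) e12) e13) e14) e15) e16) e17) e18) e19) e20) e21) e22) e24) e25) e26) e27) e28) e29) e30) e31) e34) e35) e36) e38) e39) e40) e41) e42) e43) e46) Hw)); first by rewrite pnatr_eq0.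
  ring.
have fy_3_3 : g (inord 3, inord 3) ord0 ord_max = g (inord 0, inord 0) ord0 ord_max + w * 3%:R.
  apply: (@combE _ 600%:R _ _ _ _ (comb (- 450%:R) (comb (- 180%:R) (comb 148%:R (comb 216%:R (comb 111%:R (comb (- 240%:R) (comb 162%:R (comb (- 780%:R) (comb 225%:R (comb (- 360%:R) (comb (- 185%:R) (comb (- 270%:R) (comb 764%:R (comb (- 135%:R) (comb 432%:R (comb 48%:R (comb (- 60%:R) (comb 624%:R (comb (- 780%:R) (comb 864%:R (comb (- 540%:R) (comb (- 520%:R) (comb 252%:R (comb 288%:R (comb (- 720%:R) (comb 684%:R (comb (- 400%:R) (comb 500%:R (comb (- 300%:R) (comb 150%:R (comb 225%:R (comb (- 180%:R) (comb (- 135%:R) (comb 402%:R (comb (- 300%:R) (comb (- 270%:R) (comb 36%:R (comb 351%:R (comb (- 585%:R) (comb 468%:R (comb 100%:R (scale0 250%:R e0) e1) e2) e3) e4) e5) e6) e7) e8) e9) e10) e11) e12) e13) e14) e15) e16) e17) e18) e19) e20) e21) e22) e24) e25) e26) e27) e28) e29) e30) e31) e34) e35) e36) e38) e39) e40) e41) e42) e43) e46) Hw)); first by rewrite pnatr_eq0.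
  ring.
have fx_3_4 : g (inord 3, inord 4) ord0 ord0 = g (inord 0, inord 0) ord0 ord0 - w * 4%:R.
  apply: (@combE _ 600%:R _ _ _ _ (comb 600%:R (comb 580%:R (comb (- 412%:R) (comb (- 504%:R) (comb (- 309%:R) (comb 420%:R (comb (- 378%:R) (comb 1220%:R (comb (- 725%:R) (comb 840%:R (comb 515%:R (comb (- 200%:R) (comb 630%:R (comb (- 1116%:R) (comb 435%:R (comb (- 708%:R) (comb (- 112%:R) (comb 140%:R (comb (- 1056%:R) (comb 1020%:R (comb 400%:R (comb (- 1216%:R) (comb 600%:R (comb 960%:R (comb (- 288%:R) (comb (- 672%:R) (comb 1200%:R (comb (- 996%:R) (comb 400%:R (comb (- 500%:R) (comb 400%:R (comb (- 200%:R) (comb (- 75%:R) (comb 60%:R (comb 45%:R (comb (- 438%:R) (comb 300%:R (comb 330%:R (comb (- 84%:R) (comb (- 219%:R) (comb 365%:R (scale0 (- 292%:R) e2) e3) e4) e5) e6) e7) e8) e9) e10) e11) e12) e13) e14) e15) e16) e17) e18) e19) e20) e21) e22) e23) e24) e25) e26) e27) e28) e29) e30) e31) e33) e34) e35) e36) e38) e39) e40) e41) e42) e43) e46) Hw)); first by rewrite pnatr_eq0.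
  ring.
have fy_3_4 : g (inord 3, inord 4) ord0 ord_max = g (inord 0, inord 0) ord0 ord_max + w * 3%:R.
  apply: (@combE _ 900%:R _ _ _ _ (comb (- 675%:R) (comb (- 340%:R) (comb 276%:R (comb 192%:R (comb 207%:R (comb (- 585%:R) (comb 144%:R (comb (- 1260%:R) (comb 425%:R (comb (- 320%:R) (comb (- 345%:R) (comb 600%:R (comb (- 240%:R) (comb 1068%:R (comb (- 255%:R) (comb 609%:R (comb 376%:R (comb (- 470%:R) (comb 1188%:R (comb (- 1260%:R) (comb (- 300%:R) (comb 1368%:R (comb (- 675%:R) (comb (- 1080%:R) (comb 699%:R (comb 256%:R (comb (- 1200%:R) (comb 1308%:R (comb (- 600%:R) (comb 750%:R (comb (- 450%:R) (comb 225%:R (comb 725%:R (comb (- 580%:R) (comb (- 435%:R) (comb 774%:R (comb (- 450%:R) (comb (- 690%:R) (comb 282%:R (comb 387%:R (comb (- 645%:R) (comb 516%:R (comb 150%:R (scale0 375%:R e0) e1) e2) e3) e4) e5) e6) e7) e8) e9) e10) e11) e12) e13) e14) e15) e16) e17) e18) e19) e20) e21) e22) e23) e24) e25) e26) e27) e28) e29) e30) e31) e33) e34) e35) e36) e38) e39) e40) e41) e42) e43) e46) Hw)); first by rewrite pnatr_eq0.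
  ring.
have fx_4_0 : g (inord 4, inord 0) ord0 ord0 = g (inord 0, inord 0) ord0 ord0 - w * 0%:R.
  apply: (@combE _ 450%:R _ _ _ _ (comb (- 100%:R) (comb (- 150%:R) (comb (- 12%:R) (comb (- 24%:R) (comb (- 9%:R) (comb 90%:R (comb (- 18%:R) (comb 180%:R (comb 125%:R (comb 40%:R (comb 15%:R (comb 300%:R (comb 30%:R (comb (- 36%:R) (comb (- 75%:R) (comb (- 48%:R) (comb (- 152%:R) (comb 190%:R (comb (- 336%:R) (comb 420%:R (comb (- 216%:R) (comb 180%:R (comb 120%:R (comb (- 138%:R) (comb (- 32%:R) (comb 240%:R (comb (- 276%:R) (comb 120%:R (comb (- 150%:R) (comb (- 175%:R) (comb 140%:R (comb 105%:R (comb (- 198%:R) (comb 90%:R (comb 210%:R (comb (- 114%:R) (comb (- 189%:R) (comb 315%:R (comb (- 252%:R) (comb 300%:R (scale0 (- 150%:R) e0) e1) e2) e3) e4) e5) e6) e7) e8) e9) e10) e11) e14) e15) e16) e17) e18) e19) e20) e21) e22) e24) e25) e26) e27) e28) e29) e30) e31) e32) e34) e35) e36) e38) e39) e40) e41) e42) e43) e45) e46)); first by rewrite pnatr_eq0.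
  ring.
have fy_4_0 : g (inord 4, inord 0) ord0 ord_max = g (inord 0, inord 0) ord0 ord_max + w * 4%:R.
  apply: (@combE _ 60%:R _ _ _ _ (comb (- 60%:R) (comb (- 44%:R) (comb (- 40%:R) (comb 28%:R (comb 24%:R (comb 21%:R (comb (- 24%:R) (comb 18%:R (comb (- 68%:R) (comb 55%:R (comb (- 40%:R) (comb (- 35%:R) (comb 20%:R (comb (- 30%:R) (comb 52%:R (comb (- 33%:R) (comb 48%:R (comb (- 16%:R) (comb 20%:R (comb 16%:R (comb (- 20%:R) (comb 64%:R (comb (- 36%:R) (comb (- 32%:R) (comb 12%:R (comb 32%:R (comb (- 48%:R) (comb 36%:R (comb (- 16%:R) (comb 20%:R (comb (- 40%:R) (comb 20%:R (comb (- 5%:R) (comb 4%:R (comb 3%:R (comb 6%:R (comb (- 12%:R) (comb 6%:R (comb (- 12%:R) (comb 9%:R (comb (- 15%:R) (comb 12%:R (comb 20%:R (scale0 20%:R e0) e1) e2) e3) e4) e5) e6) e7) e8) e9) e10) e11) e12) e13) e14) e15) e16) e17) e18) e19) e20) e21) e22) e24) e25) e26) e27) e28) e29) e30) e31) e32) e34) e35) e36) e38) e39) e40) e41) e42) e43) e45) e46) Hw)); first by rewrite pnatr_eq0.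
  ring.
have fx_4_1 : g (inord 4, inord 1) ord0 ord0 = g (inord 0, inord 0) ord0 ord0 - w * 1%:R.
  apply: (@combE _ 3600%:R _ _ _ _ (comb 900%:R (comb 1300%:R (comb (- 276%:R) (comb (- 1992%:R) (comb (- 207%:R) (comb 720%:R (comb (- 1494%:R) (comb 4620%:R (comb (- 725%:R) (comb 3320%:R (comb 345%:R (comb 2490%:R (comb (- 3468%:R) (comb 1875%:R (comb (- 3984%:R) (comb (- 976%:R) (comb 1220%:R (comb (- 3888%:R) (comb 4860%:R (comb (- 5568%:R) (comb 4140%:R (comb 3360%:R (comb (- 924%:R) (comb (- 2656%:R) (comb 5520%:R (comb (- 4908%:R) (comb 3120%:R (comb (- 3900%:R) (comb 600%:R (comb (- 300%:R) (comb (- 1025%:R) (comb 820%:R (comb 615%:R (comb (- 3474%:R) (comb 2340%:R (comb 2670%:R (comb (- 732%:R) (comb (- 2187%:R) (comb 3645%:R (comb (- 2916%:R) (comb 1800%:R (scale0 (- 900%:R) e0) e1) e2) e3) e4) e5) e6) e7) e8) e9) e10) e11) e12) e13) e14) e15) e16) e17) e18) e19) e20) e21) e22) e24) e25) e26) e27) e28) e29) e30) e31) e34) e35) e36) e38) e39) e40) e41) e42) e43) e46) Hw)); first by rewrite pnatr_eq0.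
  ring.
have fy_4_1 : g (inord 4, inord 1) ord0 ord_max = g (inord 0, inord 0) ord0 ord_max + w * 4%:R.
  apply: (@combE _ 1800%:R _ _ _ _ (comb (- 1800%:R) (comb (- 1460%:R) (comb 468%:R (comb 456%:R (comb 351%:R (comb (- 720%:R) (comb 342%:R (comb (- 2220%:R) (comb 925%:R (comb (- 760%:R) (comb (- 585%:R) (comb (- 570%:R) (comb 2124%:R (comb (- 195%:R) (comb 912%:R (comb (- 232%:R) (comb 290%:R (comb 1584%:R (comb (- 1980%:R) (comb 2424%:R (comb (- 1260%:R) (comb (- 1560%:R) (comb 732%:R (comb 608%:R (comb (- 1680%:R) (comb 1644%:R (comb (- 1080%:R) (comb 1350%:R (comb (- 1200%:R) (comb 600%:R (comb 625%:R (comb (- 500%:R) (comb (- 375%:R) (comb 882%:R (comb (- 810%:R) (comb (- 390%:R) (comb (- 174%:R) (comb 891%:R (comb (- 1485%:R) (comb 1188%:R (comb 600%:R (scale0 600%:R e0) e1) e2) e3) e4) e5) e6) e7) e8) e9) e10) e11) e12) e13) e14) e15) e16) e17) e18) e19) e20) e21) e22) e24) e25) e26) e27) e28) e29) e30) e31) e34) e35) e36) e38) e39) e40) e41) e42) e43) e46) Hw)); first by rewrite pnatr_eq0.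
  ring.
have fx_4_2 : g (inord 4, inord 2) ord0 ord0 = g (inord 0, inord 0) ord0 ord0 - w * 2%:R.
  apply: (@combE _ 1800%:R _ _ _ _ (comb 900%:R (comb 140%:R (comb 12%:R (comb (- 96%:R) (comb 9%:R (comb 378%:R (comb 300%:R (comb (- 175%:R) (comb 160%:R (comb (- 15%:R) (comb 570%:R (comb (- 84%:R) (comb 105%:R (comb (- 192%:R) (comb 112%:R (comb (- 140%:R) (comb (- 144%:R) (comb 180%:R (comb (- 384%:R) (comb 180%:R (comb (- 12%:R) (comb (- 128%:R) (comb 240%:R (comb (- 204%:R) (comb 240%:R (comb (- 300%:R) (comb 600%:R (comb (- 300%:R) (comb (- 25%:R) (comb 20%:R (comb 15%:R (comb (- 162%:R) (comb 180%:R (comb 30%:R (comb 84%:R (comb (- 81%:R) (comb 135%:R (comb (- 108%:R) (comb 600%:R (scale0 (- 300%:R) e0) e1) e2) e3) e4) e5) e6) e7) e8) e9) e10) e11) e12) e13) e14) e15) e16) e17) e18) e19) e21) e22) e24) e25) e26) e27) e28) e29) e30) e31) e34) e35) e36) e38) e39) e41) e42) e43) e46) Hw)); first by rewrite pnatr_eq0.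
  ring.
have fy_4_2 : g (inord 4, inord 2) ord0 ord_max = g (inord 0, inord 0) ord0 ord_max + w * 4%:R.
  apply: (@combE _ 900%:R _ _ _ _ (comb (- 900%:R) (comb (- 140%:R) (comb (- 12%:R) (comb 96%:R (comb (- 9%:R) (comb (- 378%:R) (comb (- 300%:R) (comb 175%:R (comb (- 160%:R) (comb 15%:R (comb 330%:R (comb 84%:R (comb (- 105%:R) (comb 192%:R (comb (- 112%:R) (comb 140%:R (comb 144%:R (comb (- 180%:R) (comb 384%:R (comb (- 180%:R) (comb 12%:R (comb 128%:R (comb (- 240%:R) (comb 204%:R (comb (- 240%:R) (comb 300%:R (comb (- 600%:R) (comb 300%:R (comb 25%:R (comb (- 20%:R) (comb (- 15%:R) (comb 162%:R (comb (- 180%:R) (comb (- 30%:R) (comb (- 84%:R) (comb 81%:R (comb (- 135%:R) (comb 108%:R (comb 300%:R (scale0 300%:R e0) e1) e2) e3) e4) e5) e6) e7) e8) e9) e10) e11) e12) e13) e14) e15) e16) e17) e18) e19) e21) e22) e24) e25) e26) e27) e28) e29) e30) e31) e34) e35) e36) e38) e39) e41) e42) e43) e46) Hw)); first by rewrite pnatr_eq0.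
  ring.
have fx_4_3 : g (inord 4, inord 3) ord0 ord0 = g (inord 0, inord 0) ord0 ord0 - w * 3%:R.
  apply: (@combE _ 3600%:R _ _ _ _ (comb 2700%:R (comb 2380%:R (comb (- 1356%:R) (comb (- 1992%:R) (comb (- 117%:R) (comb (- 1494%:R) (comb 4500%:R (comb (- 2975%:R) (comb 3320%:R (comb 2595%:R (comb 2490%:R (comb (- 3348%:R) (comb 1785%:R (comb (- 3264%:R) (comb 464%:R (comb (- 580%:R) (comb (- 2448%:R) (comb 3060%:R (comb (- 4608%:R) (comb 3060%:R (comb 2400%:R (comb 156%:R (comb (- 2656%:R) (comb 4080%:R (comb (- 3108%:R) (comb 1680%:R (comb (- 2100%:R) (comb 1800%:R (comb (- 900%:R) (comb 325%:R (comb (- 260%:R) (comb (- 195%:R) (comb (- 1314%:R) (comb 1260%:R (comb 510%:R (comb 348%:R (comb (- 1377%:R) (comb 2295%:R (comb (- 1836%:R) (comb 600%:R (scale0 (- 300%:R) e0) e1) e2) e3) e4) e5) e6) e7) e8) e9) e10) e11) e12) e13) e14) e15) e16) e17) e18) e19) e20) e21) e22) e24) e25) e26) e27) e28) e29) e30) e31) e34) e35) e36) e38) e39) e41) e42) e43) e46) Hw)); first by rewrite pnatr_eq0.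
  ring.
have fy_4_3 : g (inord 4, inord 3) ord0 ord_max = g (inord 0, inord 0) ord0 ord_max + w * 4%:R.
  apply: (@combE _ 600%:R _ _ _ _ (comb (- 600%:R) (comb (- 140%:R) (comb 268%:R (comb (- 24%:R) (comb (- 99%:R) (comb (- 18%:R) (comb (- 500%:R) (comb 175%:R (comb 40%:R (comb (- 35%:R) (comb 30%:R (comb 244%:R (comb (- 105%:R) (comb 192%:R (comb 8%:R (comb (- 10%:R) (comb 144%:R (comb (- 180%:R) (comb 424%:R (comb (- 180%:R) (comb (- 200%:R) (comb 132%:R (comb (- 32%:R) (comb (- 240%:R) (comb 324%:R (comb (- 40%:R) (comb 50%:R (comb (- 400%:R) (comb 200%:R (comb 275%:R (comb (- 220%:R) (comb (- 165%:R) (comb 42%:R (comb (- 30%:R) (comb (- 30%:R) (comb 6%:R (comb 81%:R (comb (- 135%:R) (comb 108%:R (comb 200%:R (scale0 200%:R e0) e1) e2) e3) e4) e5) e6) e7) e8) e9) e10) e11) e12) e13) e14) e15) e16) e17) e18) e19) e20) e21) e22) e24) e25) e26) e27) e28) e29) e30) e31) e34) e35) e36) e38) e39) e41) e42) e43) e46) Hw)); first by rewrite pnatr_eq0.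
  ring.
have fx_4_4 : g (inord 4, inord 4) ord0 ord0 = g (inord 0, inord 0) ord0 ord0 - w * 4%:R.
  apply: (@combE _ 450%:R _ _ _ _ (comb 450%:R (comb 20%:R (comb (- 150%:R) (comb (- 132%:R) (comb (- 24%:R) (comb (- 99%:R) (comb (- 18%:R) (comb 60%:R (comb 300%:R (comb (- 25%:R) (comb 40%:R (comb 165%:R (comb 30%:R (comb 84%:R (comb 15%:R (comb 42%:R (comb 88%:R (comb (- 110%:R) (comb 144%:R (comb (- 180%:R) (comb 24%:R (comb (- 90%:R) (comb (- 120%:R) (comb 132%:R (comb (- 32%:R) (comb (- 240%:R) (comb 324%:R (comb (- 120%:R) (comb 150%:R (comb 300%:R (comb (- 150%:R) (comb 275%:R (comb (- 220%:R) (comb (- 165%:R) (comb 162%:R (comb (- 90%:R) (comb (- 150%:R) (comb 66%:R (comb 81%:R (comb (- 135%:R) (scale0 108%:R e2) e3) e4) e5) e6) e7) e8) e9) e10) e11) e12) e13) e14) e15) e16) e17) e18) e19) e20) e21) e22) e24) e25) e26) e27) e28) e29) e30) e31) e34) e35) e36) e37) e38) e39) e41) e42) e43) e44) e46) Hw)); first by rewrite pnatr_eq0.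
  ring.
have fy_4_4 : g (inord 4, inord 4) ord0 ord_max = g (inord 0, inord 0) ord0 ord_max + w * 4%:R.
  apply: (@combE _ 900%:R _ _ _ _ (comb (- 900%:R) (comb (- 220%:R) (comb 600%:R (comb 156%:R (comb (- 168%:R) (comb 117%:R (comb (- 126%:R) (comb 60%:R (comb (- 300%:R) (comb 275%:R (comb 280%:R (comb (- 195%:R) (comb 210%:R (comb (- 252%:R) (comb (- 165%:R) (comb 24%:R (comb (- 464%:R) (comb 580%:R (comb (- 432%:R) (comb 540%:R (comb (- 192%:R) (comb 180%:R (comb 480%:R (comb (- 156%:R) (comb (- 224%:R) (comb 720%:R (comb (- 732%:R) (comb 240%:R (comb (- 300%:R) (comb (- 600%:R) (comb 300%:R (comb (- 325%:R) (comb 260%:R (comb 195%:R (comb (- 486%:R) (comb 180%:R (comb 570%:R (comb (- 348%:R) (comb (- 243%:R) (comb 405%:R (comb (- 324%:R) (comb 300%:R (scale0 300%:R e0) e1) e2) e3) e4) e5) e6) e7) e8) e9) e10) e11) e12) e13) e14) e15) e16) e17) e18) e19) e20) e21) e22) e24) e25) e26) e27) e28) e29) e30) e31) e34) e35) e36) e37) e38) e39) e41) e42) e43) e44) e46) Hw)); first by rewrite pnatr_eq0.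
  ring.
move=> x; apply/rowP => k; rewrite (Hrot x) /= !mxE.
case: x => [[i Hi] [j Hj]] /=.
have tx : t ord0 ord0 = g (inord 0, inord 0) ord0 ord0 by [].
have ty : t ord0 ord_max = g (inord 0, inord 0) ord0 ord_max by [].
have z : (0 : 'I_1) = ord0 by apply: val_inj.
rewrite z.
case: k => [[|[|k]] Hk] //=.
- have -> : Ordinal Hk = ord0 by apply: val_inj.
  rewrite ?eqxx ?tx /=.
  by do 5?[case: j Hj => [|j] Hj]; do 5?[case: i Hi => [|i] Hi]; rewrite ?inordK //; first [ ring | rewrite fx_0_1; ring | rewrite fy_0_1; ring | rewrite fx_0_2; ring | rewrite fy_0_2; ring | rewrite fx_0_3; ring | rewrite fy_0_3; ring | rewrite fx_0_4; ring | rewrite fy_0_4; ring | rewrite fx_1_0; ring | rewrite fy_1_0; ring | rewrite fx_1_1; ring | rewrite fy_1_1; ring | rewrite fx_1_2; ring | rewrite fy_1_2; ring | rewrite fx_1_3; ring | rewrite fy_1_3; ring | rewrite fx_1_4; ring | rewrite fy_1_4; ring | rewrite fx_2_0; ring | rewrite fy_2_0; ring | rewrite fx_2_1; ring | rewrite fy_2_1; ring | rewrite fx_2_2; ring | rewrite fy_2_2; ring | rewrite fx_2_3; ring | rewrite fy_2_3; ring | rewrite fx_2_4; ring | rewrite fy_2_4; ring | rewrite fx_3_0; ring | rewrite fy_3_0; ring | rewrite fx_3_1; ring | rewrite fy_3_1; ring | rewrite fx_3_2; ring | rewrite fy_3_2; ring | rewrite fx_3_3; ring | rewrite fy_3_3;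 ring | rewrite fx_3_4; ring | rewrite fy_3_4; ring | rewrite fx_4_0; ring | rewrite fy_4_0; ring | rewrite fx_4_1; ring | rewrite fy_4_1; ring | rewrite fx_4_2; ring | rewrite fy_4_2; ring | rewrite fx_4_3; ring | rewrite fy_4_3; ring | rewrite fx_4_4; ring | rewrite fy_4_4; ring ].
- have -> : Ordinal Hk = ord_max by apply: val_inj.
  rewrite ?ty /=.
  by do 5?[case: j Hj => [|j] Hj]; do 5?[case: i Hi => [|i] Hi]; rewrite ?inordK //; first [ ring | rewrite fx_0_1; ring | rewrite fy_0_1; ring | rewrite fx_0_2; ring | rewrite fy_0_2; ring | rewrite fx_0_3; ring | rewrite fy_0_3; ring | rewrite fx_0_4; ring | rewrite fy_0_4; ring | rewrite fx_1_0; ring | rewrite fy_1_0; ring | rewrite fx_1_1; ring | rewrite fy_1_1; ring | rewrite fx_1_2; ring | rewrite fy_1_2; ring | rewrite fx_1_3; ring | rewrite fy_1_3; ring | rewrite fx_1_4; ring | rewrite fy_1_4; ring | rewrite fx_2_0; ring | rewrite fy_2_0; ring | rewrite fx_2_1; ring | rewrite fy_2_1; ring | rewrite fx_2_2; ring | rewrite fy_2_2; ring | rewrite fx_2_3; ring | rewrite fy_2_3; ring | rewrite fx_2_4; ring | rewrite fy_2_4; ring | rewrite fx_3_0; ring | rewrite fy_3_0; ring | rewrite fx_3_1; ring | rewrite fy_3_1; ring | rewrite fx_3_2; ring | rewrite fy_3_2; ring | rewrite fx_3_3; ring | rewrite fy_3_3; ring | rewrite fx_3_4; ring | rewrite fy_3_4;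 ring | rewrite fx_4_0; ring | rewrite fy_4_0; ring | rewrite fx_4_1; ring | rewrite fy_4_1; ring | rewrite fx_4_2; ring | rewrite fy_4_2; ring | rewrite fx_4_3; ring | rewrite fy_4_3; ring | rewrite fx_4_4; ring | rewrite fy_4_4; ring ].
Qed.
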